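(* Let $f:\mathbb{R}\to\mathbb{R}$ and $g:\mathbb{R}\to\mathbb{R}$ be given with $\mathrm{Cr}(f)<\infty$, and let $\mathcal{I}_f$ denote the partition of $\mathbb{R}$ into the $\mathrm{Cr}(f)$ maximal intervals on which $\tilde f$ is constant. Then \[ \frac{1}{\mathrm{Cr}(f)}\sum_{U\in\mathcal{I}_f}\mathbf{1}\big[\forall x\in U:\ \tilde f(x)\neq\tilde g(x)\big]\ \ge\ \frac12\left(1-2\,\frac{\mathrm{Cr}(g)}{\mathrm{Cr}(f)}\right) \] (where the right-hand side is $-\infty$ if $\mathrm{Cr}(g)=\infty$).
   Context: For $h:\mathbb{R}\to\mathbb{R}$ let $\tilde h(x)=\mathbf{1}[h(x)\ge 1/2]$. The crossing number $\mathrm{Cr}(h)$ is the minimum number of intervals in a partition of $\mathbb{R}$ into intervals (possibly degenerate, unbounded, open, closed or half-open) on each of which $\tilde h$ is constant, i.e. the number of maximal intervals on which $\tilde h$ is constant. *)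

(* Defs.v *)
From Stdlib Require Import Reals Lra List ClassicalEpsilon.
Open Scope R_scope.

Definition tld (h : R -> R) (x : R) : bool :=
  if Rle_dec (1/2) (h x) then true else false.

(* intervals (possibly degenerate/unbounded/open/closed/half-open) = convex subsets *)
Definition is_interval (U : R -> Prop) : Prop :=
  forall x y z, U x -> U z -> x <= y <= z -> U y.

Definition const_on (h : R -> R) (U : R -> Prop) : Prop :=
  forall x y, U x -> U y -> tld h x = tld h y.

Definition maximal_interval (h : R -> R) (U : R -> Prop) : Prop :=
  (exists x, U x) /\ is_interval U /\ const_on h U /\
  forall V, is_interval V -> const_on h V -> (forall x, U x -> V x) ->
    forall x, V x -> U x.

Definition same_set (U V : R -> Prop) : Prop := forall x, U x <-> V x.

(* Us lists exactly the maximal intervals of h, each once (up to extensional equality):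
   this is the partition I_h. *)
Definition max_interval_list (h : R -> R) (Us : list (R -> Prop)) : Prop :=
  Forall (maximal_interval h) Us /\
  ForallOrdPairs (fun U V => ~ same_set U V) Us /\
  (forall U, maximal_interval h U -> Exists (same_set U) Us).

Definition crossing_number (h : R -> R) (n : nat) : Prop :=
  exists Us, max_interval_list h Us /\ length Us = n.

Definition indicP (P : Prop) : R :=
  if excluded_middle_informative P then 1 else 0.

(* Main.v *)
Require Import Defs.
From Stdlib Require Import Reals List Lra Lia Sorted Permutation ClassicalEpsilon Bool.
Open Scope R_scope.

Definition Mx (h : R -> R) (x : R) : R -> Prop :=
  fun y => forall z, (x <= z <= y \/ y <= z <= x) -> tld h z = tld h x.

Lemma btw_refl x y : x <= y <= y \/ y <= y <= x.
Proof. destruct (Rle_dec x y); [left|right]; lra. Qed.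

Lemma Mx_self h x : Mx h x x.
Proof. intros z Hz. assert (z = x) by (destruct Hz; lra). subst; reflexivity. Qed.

Lemma Mx_max h x : maximal_interval h (Mx h x).
Proof.
  split; [exists x; apply Mx_self|].
  split; [|split].
  - intros y1 y y2 H1 H2 Hy z Hz.
    destruct (Rle_dec x y).
    + apply H2. left. destruct Hz; lra.
    + apply H1. right. destruct Hz; lra.
  - intros y1 y2 H1 H2. rewrite (H1 y1 (btw_refl _ _)), (H2 y2 (btw_refl _ _)). reflexivity.
  - intros V HV HC Hsub y Vy z Hz.
    assert (Vx : V x) by (apply Hsub, Mx_self).
    assert (Vz : V z).
    { destruct Hz as [Hz|Hz]; [apply (HV x z y)|apply (HV y z x)]; auto. }
    apply HC; auto.
Qed.

Lemma union_interval (U1 U2 : R -> Prop) a b :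
  is_interval U1 -> is_interval U2 -> U1 a -> U2 b -> a <= b ->
  (forall z, a <= z <= b -> U1 z \/ U2 z) ->
  is_interval (fun x => U1 x \/ U2 x).
Proof.
  intros I1 I2 Ha Hb Hab Hbr x y z Hx Hz Hy.
  destruct (Rle_dec a y) as [Hay|Hay]; destruct (Rle_dec y b) as [Hyb|Hyb].
  - apply Hbr; lra.
  - destruct Hz as [Hz|Hz].
    + left. apply (I1 a y z); auto; lra.
    + right. apply (I2 b y z); auto; lra.
  - destruct Hx as [Hx|Hx].
    + left. apply (I1 x y a); auto; lra.
    + right. apply (I2 x y b); auto; lra.
  - lra.
Qed.

Lemma meet_same h U V x : maximal_interval h U -> maximal_interval h V -> U x -> V x -> same_set U V.
Proof.
  intros [_ [IU [CU MU]]] [_ [IV [CV MV]]] Ux Vx.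
  set (W := fun y => U y \/ V y).
  assert (IW : is_interval W).
  { apply (union_interval U V x x); auto; [lra|].
    intros z Hz; left; replace z with x by lra; auto. }
  assert (CW : const_on h W).
  { intros y1 y2 [H1|H1] [H2|H2]; auto.
    - rewrite (CU y1 x), (CV x y2); auto.
    - rewrite (CV y1 x), (CU x y2); auto. }
  intro y; split; intro Hy.
  - apply (MV W IW CW (fun y H => or_intror H)); left; auto.
  - apply (MU W IW CW (fun y H => or_introl H)); right; auto.
Qed.

Lemma fop_eq (l : list (R->Prop)) a b : ForallOrdPairs (fun U V => ~ same_set U V) l ->
  In a l -> In b l -> same_set a b -> a = b.
Proof.
  induction 1 as [|c l' Hc Hl IH]; simpl; [tauto|].
  intros [<-|Ha] [<-|Hb] Hs; auto.
  - exfalso. rewrite Forall_forall in Hc. apply (Hc b Hb Hs).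
  - exfalso. rewrite Forall_forall in Hc. apply (Hc a Ha).
    intro x; specialize (Hs x); tauto.
Qed.

Lemma SS_app_lt (l1 l2 : list R) x y : StronglySorted Rlt (l1 ++ l2) -> In x l1 -> In y l2 -> x < y.
Proof.
  induction l1 as [|a l1 IH]; simpl; [tauto|].
  intros HS [<-|Hx] Hy; inversion HS as [|? ? HS' HF]; subst.
  - rewrite Forall_forall in HF. apply HF, in_or_app; auto.
  - apply IH; auto.
Qed.

Lemma ins_sorted (l : list R) a : StronglySorted Rlt l -> ~ In a l ->
  exists l', Permutation (a::l) l' /\ StronglySorted Rlt l'.
Proof.
  induction l as [|b l IH]; intros HS Hn.
  - exists (a::nil); split; auto. constructor; auto.
  - inversion HS as [|? ? HS' HF]; subst.
    destruct (Rlt_dec a b) as [Hab|Hab].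
    + exists (a::b::l); split; auto. constructor; auto. constructor; auto.
      rewrite Forall_forall in *. intros x Hx. apply HF in Hx. lra.
    + assert (b < a). { assert (a <> b) by (intro; subst; apply Hn; left; auto). lra. }
      destruct IH as [l' [Hp Hs]]; auto. { intro; apply Hn; right; auto. }
      exists (b::l'); split.
      * eapply perm_trans; [apply perm_swap|]. apply perm_skip; auto.
      * constructor; auto. rewrite Forall_forall in *. intros x Hx.
        apply Permutation_sym in Hp. apply (Permutation_in _ Hp) in Hx.
        destruct Hx as [<-|Hx]; auto.
Qed.

Lemma sort_exists (l : list R) : NoDup l -> exists l', Permutation l l' /\ StronglySorted Rlt l'.
Proof.
  induction 1 as [|a l Hn Hd IH].
  - exists nil; split; auto; constructor.
  - destruct IH as [l' [Hp Hs]].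
    destruct (ins_sorted l' a Hs) as [l'' [Hp' Hs']].
    + intro Hi. apply Hn. apply (Permutation_in _ (Permutation_sym Hp)); auto.
    + exists l''; split; auto. eapply perm_trans; [apply perm_skip, Hp|auto].
Qed.

Definition ev (f g : R -> R) (x : R) : nat :=
  if bool_dec (tld f x) (tld g x) then 0%nat else 1%nat.
Definition cnt f g (l : list R) : nat := fold_right (fun x acc => (ev f g x + acc)%nat) 0%nat l.
Fixpoint chg (g : R -> R) (l : list R) : nat :=
  match l with
  | a :: ((b :: _) as t) => ((if bool_dec (tld g a) (tld g b) then 0 else 1) + chg g t)%nat
  | _ => 0%nat
  end.

Lemma disc f g (l : list R) :
  (forall l1 a b l2, l = l1 ++ a :: b :: l2 -> tld f a <> tld f b) ->
  match l with nil => True | a :: _ => (length l + ev f g a <= 2 * cnt f g l + chg g l + 1)%nat end.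
Proof.
  induction l as [|a t IH]; intros H; [exact I|].
  destruct t as [|b t].
  - unfold cnt; simpl. lia.
  - assert (Hab : tld f a <> tld f b) by (apply (H nil a b t); reflexivity).
    assert (IH' : (length (b::t) + ev f g b <= 2 * cnt f g (b::t) + chg g (b::t) + 1)%nat).
    { apply IH. intros l1 x y l2 E. apply (H (a::l1) x y l2). rewrite E; reflexivity. }
    change (cnt f g (a::b::t)) with (ev f g a + cnt f g (b::t))%nat.
    change (chg g (a::b::t)) with ((if bool_dec (tld g a) (tld g b) then 0 else 1) + chg g (b::t))%nat.
    change (length (a::b::t)) with (S (length (b::t))).
    set (C := cnt f g (b::t)) in *; set (K := chg g (b::t)) in *.
    set (L := length (b::t)) in *.
    unfold ev in *.
    destruct (bool_dec (tld f a) (tld g a)); destruct (bool_dec (tld f b) (tld g b));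
      destruct (bool_dec (tld g a) (tld g b)); try congruence; lia.
Qed.

Lemma chg_le g (qs : list R) : forall (Vs : list (R -> Prop)),
  StronglySorted Rlt qs ->
  (forall q, In q qs -> exists V, In V Vs /\ V q) ->
  (forall V, In V Vs -> is_interval V /\ const_on g V) ->
  (chg g qs <= length Vs)%nat.
Proof.
  induction qs as [|a t IH]; intros Vs HS Hc HV; [simpl; lia|].
  destruct t as [|b t]; [simpl; lia|].
  inversion HS as [|? ? HS' HF]; subst.
  change (chg g (a::b::t)) with ((if bool_dec (tld g a) (tld g b) then 0 else 1) + chg g (b::t))%nat.
  destruct (bool_dec (tld g a) (tld g b)) as [E|E].
  - simpl. apply IH; auto. intros q Hq; apply Hc; right; auto.
  - destruct (Hc a (or_introl eq_refl)) as [V1 [HV1 Va]].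
    destruct (in_split _ _ HV1) as [A [B EV]]. subst Vs.
    assert (Hl : length (A ++ V1 :: B) = S (length (A ++ B))) by (rewrite !length_app; simpl; lia).
    rewrite Hl.
    assert (IH' : (chg g (b::t) <= length (A ++ B))%nat).
    { apply IH; auto.
      - intros q Hq. destruct (Hc q (or_intror Hq)) as [V [HVin Vq]].
        apply in_app_or in HVin. destruct HVin as [HVin|[<-|HVin]].
        + exists V; split; auto; apply in_or_app; auto.
        + exfalso. apply E.
          destruct (HV V1 HV1) as [I C].
          assert (Hab : a < b) by (rewrite Forall_forall in HF; apply HF; left; auto).
          assert (Hbq : b <= q).
          { destruct Hq as [<-|Hq]; [lra|]. inversion HS' as [|? ? HS'' HF'']; subst.
            rewrite Forall_forall in HF''. apply Rlt_le, HF'', Hq. }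
          apply C; auto. apply (I a b q); auto. lra.
        + exists V; split; auto; apply in_or_app; auto.
      - intros V HVin. apply HV. apply in_app_or in HVin. apply in_or_app.
        destruct HVin; [left|right; right]; auto. }
    lia.
Qed.

Lemma sum_eq f g (p : (R->Prop) -> R) (Us : list (R -> Prop)) :
  (forall U, In U Us -> U (p U) /\ (~ (forall x, U x -> tld f x <> tld g x) -> tld f (p U) = tld g (p U))) ->
  fold_right Rplus 0 (map (fun U => indicP (forall x, U x -> tld f x <> tld g x)) Us) = INR (cnt f g (map p Us)).
Proof.
  induction Us as [|U Us IH]; intros H; [reflexivity|].
  cbn [map fold_right].
  change (cnt f g (p U :: map p Us)) with (ev f g (p U) + cnt f g (map p Us))%nat.
  rewrite plus_INR, IH by (intros; apply H; right; auto).
  f_equal. destruct (H U (or_introl eq_refl)) as [HU Hb].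
  unfold indicP, ev. destruct (excluded_middle_informative _) as [G|G];
    destruct (bool_dec _ _) as [E|E]; try reflexivity.
  - exfalso; apply (G _ HU E).
  - exfalso; apply E, Hb, G.
Qed.

Lemma nodup_map f (p : (R->Prop)->R) Us :
  Forall (maximal_interval f) Us -> ForallOrdPairs (fun U V => ~ same_set U V) Us ->
  (forall U, In U Us -> U (p U)) -> NoDup (map p Us).
Proof.
  induction Us as [|U Us IH]; intros HF HO Hp; simpl; constructor.
  - intro Hi. apply in_map_iff in Hi. destruct Hi as [V [E HV]].
    inversion HO as [|? ? HO1 HO2]; subst. inversion HF as [|? ? HF1 HF2]; subst.
    rewrite Forall_forall in HO1, HF2.
    apply (HO1 V HV). apply (meet_same f U V (p U)); auto.
    + apply Hp; left; auto.
    + rewrite <- E. apply Hp; right; auto.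
  - inversion HO; inversion HF; subst; apply IH; auto. intros; apply Hp; right; auto.
Qed.

Lemma alt_lemma f (Us : list (R->Prop)) (p : (R->Prop)->R) qs :
  Forall (maximal_interval f) Us -> ForallOrdPairs (fun U V => ~ same_set U V) Us ->
  (forall x, exists U, In U Us /\ U x) ->
  (forall U, In U Us -> U (p U)) ->
  Permutation (map p Us) qs -> StronglySorted Rlt qs ->
  forall l1 a b l2, qs = l1 ++ a :: b :: l2 -> tld f a <> tld f b.
Proof.
  intros HF HO Hcov Hp Hperm HS l1 a b l2 Eq Efab.
  rewrite Forall_forall in HF.
  assert (E2 : l1 ++ a::b::l2 = (l1 ++ a::b::nil) ++ l2) by (rewrite <- app_assoc; reflexivity).
  assert (E1 : l1 ++ a::b::l2 = (l1 ++ a::nil) ++ (b :: l2)) by (rewrite <- app_assoc; reflexivity).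
  assert (Hab : a < b).
  { subst qs. rewrite E1 in HS. apply (SS_app_lt _ _ _ _ HS).
    - apply in_or_app; right; left; auto.
    - left; auto. }
  assert (Hin : forall x, In x qs -> x <= a \/ b <= x).
  { intros x Hx. subst qs. apply in_app_or in Hx. destruct Hx as [Hx|Hx].
    - left. apply Rlt_le. apply (SS_app_lt l1 (a::b::l2)); auto. left; auto.
    - destruct Hx as [<-|[<-|Hx]]; [left; lra| right; lra|].
      right. rewrite E2 in HS. apply Rlt_le. apply (SS_app_lt _ _ _ _ HS); auto.
      apply in_or_app; right; right; left; auto. }
  assert (Hq : forall x, In x qs -> exists U, In U Us /\ p U = x).
  { intros x Hx. apply (Permutation_in _ (Permutation_sym Hperm)) in Hx.
    apply in_map_iff in Hx. destruct Hx as [U [E HU]]; eauto. }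
  assert (Hpq : forall U, In U Us -> In (p U) qs).
  { intros U HU. apply (Permutation_in _ Hperm). apply in_map; auto. }
  destruct (Hq a) as [Ua [HUa Ea]]. { subst qs; apply in_or_app; right; left; auto. }
  destruct (Hq b) as [Ub [HUb Eb]]. { subst qs; apply in_or_app; right; right; left; auto. }
  assert (Ma := HF Ua HUa). assert (Mb := HF Ub HUb).
  assert (Uaa : Ua a) by (rewrite <- Ea; apply Hp; auto).
  assert (Ubb : Ub b) by (rewrite <- Eb; apply Hp; auto).
  destruct Ma as [Na [IA [CA MA]]]. destruct Mb as [Nb [IB [CB MB]]].
  assert (Hbr : forall z, a <= z <= b -> Ua z \/ Ub z).
  { intros z Hz. destruct (Hcov z) as [U [HU Uz]].
    assert (MU := HF U HU). assert (UpU := Hp U HU).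
    destruct (Hin (p U) (Hpq U HU)) as [H1|H1].
    - left. assert (Ua' : U a) by (destruct MU as [_ [IU _]]; apply (IU (p U) a z); auto; lra).
      apply (meet_same f U Ua a); auto.
    - right. assert (Ub' : U b) by (destruct MU as [_ [IU _]]; apply (IU z b (p U)); auto; lra).
      apply (meet_same f U Ub b); auto. }
  set (W := fun x => Ua x \/ Ub x).
  assert (IW : is_interval W) by (apply (union_interval Ua Ub a b); auto; lra).
  assert (CW : const_on f W).
  { intros y1 y2 H1 H2.
    assert (T1 : tld f y1 = tld f a) by (destruct H1; [apply CA|rewrite Efab; apply CB]; auto).
    assert (T2 : tld f y2 = tld f a) by (destruct H2; [apply CA|rewrite Efab; apply CB]; auto).
    congruence. }
  assert (Uab : Ua b) by (apply (MA W IW CW (fun y H => or_introl H)); right; auto).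
  assert (S : same_set Ua Ub) by (apply (meet_same f Ua Ub b); auto; apply HF; auto).
  assert (Ua = Ub) by (apply (fop_eq Us); auto).
  subst Ub. lra.
Qed.

Theorem lemma3p1 (f g : R -> R) (Us : list (R -> Prop))
  (HUs : max_interval_list f Us) (m : nat) (Hg : crossing_number g m) :
  / INR (length Us) *
    fold_right Rplus 0
      (map (fun U => indicP (forall x, U x -> tld f x <> tld g x)) Us)
  >= 1/2 * (1 - 2 * (INR m / INR (length Us))).
Proof.
  destruct HUs as [HF [HO HC]].
  destruct Hg as [Vs [[GF [GO GC]] HL]].
  assert (Hcov : forall x, exists U, In U Us /\ U x).
  { intro x. destruct (proj1 (Exists_exists _ _) (HC _ (Mx_max f x))) as [U [HU HS]].
    exists U; split; auto. apply HS, Mx_self. }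
  assert (Gcov : forall x, exists V, In V Vs /\ V x).
  { intro x. destruct (proj1 (Exists_exists _ _) (GC _ (Mx_max g x))) as [U [HU HS]].
    exists U; split; auto. apply HS, Mx_self. }
  set (P := fun (U : R -> Prop) x => U x /\ (~ (forall x, U x -> tld f x <> tld g x) -> tld f x = tld g x)).
  set (p := fun U => epsilon (inhabits 0) (P U)).
  assert (Hp : forall U, In U Us -> P U (p U)).
  { intros U HU. apply epsilon_spec.
    rewrite Forall_forall in HF. destruct (HF U HU) as [[y Uy] _].
    destruct (excluded_middle_informative (exists x, U x /\ tld f x = tld g x)) as [[x [Ux E]]|N].
    - exists x; split; auto.
    - exists y; split; auto. intro G; exfalso; apply G. intros x Ux E; apply N; eauto. }
  rewrite (sum_eq f g p Us Hp).
  assert (Hp1 : forall U, In U Us -> U (p U)) by (intros; apply Hp; auto).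
  destruct (sort_exists (map p Us)) as [qs [Hperm HS]].
  { apply (nodup_map f); auto. }
  assert (Halt := alt_lemma f Us p qs HF HO Hcov Hp1 Hperm HS).
  assert (Hchg : (chg g qs <= length Vs)%nat).
  { apply chg_le; auto.
    intros V HV. rewrite Forall_forall in GF. destruct (GF V HV) as [_ [I [C _]]]; auto. }
  assert (Hcnt : cnt f g (map p Us) = cnt f g qs).
  { clear -Hperm. induction Hperm; simpl; auto; lia. }
  assert (Hlen : length Us = length qs) by (rewrite <- (Permutation_length Hperm), length_map; auto).
  destruct (Hcov 0) as [U0 [HU0 _]].
  assert (Hpos : (1 <= length qs)%nat).
  { rewrite <- Hlen. destruct Us; [destruct HU0|simpl; lia]. }
  destruct qs as [|q0 qs']; [simpl in Hpos; lia|].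
  assert (Hm : (1 <= m)%nat).
  { destruct (Gcov q0) as [V [HV _]]. rewrite <- HL. destruct Vs; [destruct HV|simpl; lia]. }
  assert (D := disc f g _ Halt). cbv beta iota in D.
  rewrite Hcnt, Hlen.
  set (n := length (q0 :: qs')) in *.
  set (c := cnt f g (q0 :: qs')) in *.
  assert (Key : (n <= 2 * c + 2 * m)%nat) by lia.
  apply le_INR in Key. rewrite plus_INR, !mult_INR in Key. simpl (INR 2) in Key.
  assert (Np : 0 < INR n) by (apply lt_0_INR; lia).
  apply Rle_ge.
  assert (Eq : / INR n * INR c - 1/2 * (1 - 2 * (INR m / INR n)) = (2 * INR c + 2 * INR m - INR n) * / (2 * INR n))
    by (field; lra).
  assert (0 <= (2 * INR c + 2 * INR m - INR n) * / (2 * INR n)).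
  { apply Rmult_le_pos; [lra|]. left; apply Rinv_0_lt_compat; lra. }
  lra.
Qed.
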